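(* For any single-elimination tournament $\mathcal{T}$, any scoring system $\sigma$, and any bracket $\widehat{B}$ of $\mathcal{T}$, the set $\{\widehat{B}_a:a\in P(\mathcal{T})\}$ is a $\sigma$-resolving set.
   Context: A single-elimination tournament is a finite directed graph $\mathcal{T}$ such that: (a) $\mathcal{T}$ has exactly one sink (vertex with no out-neighbours); (b) every non-sink vertex has exactly one out-neighbour; (c) $\mathcal{T}$ has no directed cycles; (d) $|N^-(v)|\ne 1$ for every vertex $v$, where $N^-(v)$ denotes the set of in-neighbours of $v$. The players $P(\mathcal{T})$ are the sources and the matches are $M(\mathcal{T})=V(\mathcal{T})\setminus P(\mathcal{T})$. For a vertex $u$, $P(u)$ is the set of players $c$ for which there is a directed walk from $c$ to $u$ (length $0$ allowed). A bracket is a function $B:V(\mathcal{T})\to P(\mathcal{T})$ with $B(c)=c$ for every player $c$ and $B(x)\in\{B(u):u\in N^-(x)\}$ for every match $x$. For a bracket $\widehat{B}$ and player $a$, $\widehat{B}_a$ is the bracket with $\widehat{B}_a(u)=a$ if $a\in P(u)$ and $\widehat{B}_a(u)=\widehat{B}(u)$ otherwise. A scoring system is any function $\sigma:M(\mathcal{T})\to\mathbb{R}_{>0}$, and $\mathrm{score}_\sigma(B,B')=\sum_{x\in M(\mathcal{T}):\,B(x)=B'(x)}\sigma(x)$. A set of brackets $\mathcal{B}$ is $\sigma$-resolving if for every pair of distinct brackets $B\ne B'$ there is $B_i\in\mathcal{B}$ with $\mathrm{score}_\sigma(B_i,B)\ne\mathrm{score}_\sigma(B_i,B')$. *)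

(* Defs.v *)
From HB Require Import structures.
From mathcomp Require Import all_boot all_order all_algebra.
From mathcomp Require Import reals.
Set Implicit Arguments. Unset Strict Implicit. Unset Printing Implicit Defensive.
Import Order.TTheory GRing.Theory Num.Theory.

Section SET.
Variables (V : finType) (e : rel V).

Definition out_nbrs (v : V) : {set V} := [set w | e v w].
Definition in_nbrs (v : V) : {set V} := [set u | e u v].

Definition is_sink (v : V) : bool := out_nbrs v == set0.

Definition acyclic_rel : Prop := forall u v, e u v -> ~~ connect e v u.

Definition is_SET : Prop :=
  [/\ #|[set v | is_sink v]| = 1%N,
      (forall v, ~~ is_sink v -> #|out_nbrs v| = 1%N),
      acyclic_rel &
      (forall v, #|in_nbrs v| != 1%N)].

Definition is_player (v : V) : bool := in_nbrs v == set0.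
Definition is_match (v : V) : bool := ~~ is_player v.

Definition players_of (u : V) : {set V} := [set c | is_player c & connect e c u].

Definition is_bracket (B : {ffun V -> V}) : Prop :=
  (forall v, is_player (B v)) /\
  (forall c, is_player c -> B c = c) /\
  (forall x, is_match x -> exists2 u, e u x & B x = B u).

Definition bracket_at (Bh : {ffun V -> V}) (a : V) : {ffun V -> V} :=
  [ffun u => if a \in players_of u then a else Bh u].

Definition score (R : realType) (sigma : V -> R) (B B' : {ffun V -> V}) : R :=
  (\sum_(x | is_match x && (B x == B' x)) sigma x)%R.

Definition resolving (R : realType) (sigma : V -> R) (S : {set {ffun V -> V}}) : Prop :=
  forall B B', is_bracket B -> is_bracket B' -> B != B' ->
    exists2 Bi, Bi \in S & score sigma Bi B != score sigma Bi B'.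

End SET.

(* Main.v *)
Require Import Defs.
From HB Require Import structures.
From mathcomp Require Import all_boot all_order all_algebra.
From mathcomp Require Import reals.
From mathcomp Require Import ring lra.
Import Order.TTheory GRing.Theory Num.Theory.

Set Implicit Arguments. Unset Strict Implicit.
Section Aux.
Variables (V : finType) (e : rel V).
Hypothesis uniq_out : forall u v w, e u v -> e u w -> v = w.
Hypothesis acyc : acyclic_rel e.

Definition anc (v : V) : {set V} := [set w | connect e w v].

Lemma conn_first u w : connect e u w -> u != w -> exists2 y, e u y & connect e y w.
Proof.
move=> /connectP [[|y p]] /=; first by move=> _ ->; rewrite eqxx.
move=> /andP[euy py] -> _; exists y => //; apply/connectP; by exists p.
Qed.

Lemma conn_last x z : connect e x z -> x != z -> exists2 u, e u z & connect e x u.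
Proof.
move=> /connectP [p]; elim/last_ind: p => [|p y _] /=; first by move=> _ ->; rewrite eqxx.
rewrite rcons_path last_rcons => /andP[px ey] -> _.
exists (last x p) => //; apply/connectP; by exists p.
Qed.

Lemma chain b x y : connect e b x -> connect e b y -> connect e x y \/ connect e y x.
Proof.
move=> /connectP [p]; elim: p b => [|c p IH] b /=.
  by move=> _ -> ->; left.
move=> /andP[ebc pc] hxl hby.
case: (eqVneq b y) => [<-|nby].
  by right; apply/connectP; exists (c :: p) => //=; rewrite ebc.
have [w ebw cwy] := @conn_first b y hby nby.
have wc := uniq_out ebw ebc; subst w.
exact: IH pc hxl cwy.
Qed.

Lemma inn_uniq b u v z : e u z -> e v z -> connect e b u -> connect e b v -> u = v.
Proof.
move=> euz evz bu bv; case: (eqVneq u v) => // nuv.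
case: (chain bu bv) => [uv|vu].
  have [w euw wv] := conn_first uv nuv.
  have wz := uniq_out euw euz; subst w.
  by move: (acyc evz); rewrite wv.
have [w evw wu] := conn_first vu (ltac:(by rewrite eq_sym)).
have wz := uniq_out evw evz; subst w.
by move: (acyc euz); rewrite wu.
Qed.

Lemma anc_lt u x : e u x -> #|anc u| < #|anc x|.
Proof.
move=> eux; apply: proper_card; apply/properP; split.
  apply/subsetP => w; rewrite !inE => wu; exact: connect_trans wu (connect1 eux).
exists x; rewrite !inE ?connect0 //; exact: acyc eux.
Qed.

Lemma anc_strict w x : connect e w x -> w != x -> #|anc w| < #|anc x|.
Proof.
move=> wx nwx; have [u eux wu] := conn_last wx nwx.
apply: leq_ltn_trans (anc_lt eux); apply: subset_leq_card.
apply/subsetP => y; rewrite !inE => yw; exact: connect_trans yw wu.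
Qed.

Lemma winner_conn B : is_bracket e B -> forall v, connect e (B v) v.
Proof.
move=> [Bp [Bc Bm]].
suff H : forall n v, #|anc v| < n -> connect e (B v) v by move=> v; exact: (H _ v (ltnSn _)).
elim=> // n IH v; rewrite ltnS => hv.
case pv: (is_player e v); first by rewrite Bc ?connect0.
have hmv : is_match e v by rewrite /is_match pv.
have [u euv ->] := Bm v hmv.
apply: connect_trans (IH u _) (connect1 euv).
exact: leq_trans (anc_lt euv) hv.
Qed.

Lemma winner_mono B : is_bracket e B ->
  forall z x, connect e x z -> connect e (B z) x -> B x = B z.
Proof.
move=> hB; have [Bp [Bc Bm]] := hB.
suff H : forall n z x, #|anc z| < n -> connect e x z -> connect e (B z) x -> B x = B z.
  by move=> z x; exact: (H _ z x (ltnSn _)).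
elim=> // n IH z x; rewrite ltnS => hz xz hx.
case: (eqVneq x z) => [->|nxz] //.
have [v evz xv] := conn_last xz nxz.
have hm : is_match e z.
  by rewrite /is_match /is_player; apply/set0Pn; exists v; rewrite inE.
have [u euz Bzu] := Bm z hm.
rewrite Bzu in hx *.
have bu := winner_conn hB u.
have bv : connect e (B u) v := connect_trans hx xv.
have uv := inn_uniq euz evz bu bv; subst v.
apply: IH => //; exact: leq_trans (anc_lt euz) hz.
Qed.

End Aux.
Unset Implicit Arguments. Set Strict Implicit.

Local Open Scope ring_scope.

Theorem corollary5p14 (V : finType) (e : rel V) (R : realType) (sigma : V -> R)
  (Bh : {ffun V -> V}) :
  is_SET e ->
  (forall x, is_match e x -> (0 < sigma x)%R) ->
  is_bracket e Bh ->
  resolving e sigma [set bracket_at e Bh a | a in [set c | is_player e c]].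
Proof.
move=> [_ hout acyc _] sig_pos _ B B' hB hB' nBB'.
have uo : forall u v w, e u v -> e u w -> v = w.
  move=> u v w euv euw.
  have ns : ~~ is_sink e u by rewrite /is_sink; apply/set0Pn; exists v; rewrite inE.
  have [y hy] := cards1P (introT eqP (hout u ns)).
  have : v \in out_nbrs e u by rewrite inE.
  have : w \in out_nbrs e u by rewrite inE.
  by rewrite hy !inE => /eqP -> /eqP ->.
have [Bp [Bc Bm]] := hB; have [Bp' [Bc' Bm']] := hB'.
have [x0 hx0] : exists x, B x != B' x.
  case: (pickP (fun v => B v != B' v)) => [x0 hx0|h]; first by exists x0.
  by case/eqP: nBB'; apply/ffunP => v; move: (h v) => /negbFE/eqP.
have [x hx xmin] := @arg_minnP _ x0 (fun y => B y != B' y) (fun y => #|anc e y|) hx0.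
have below : forall w, connect e w x -> w != x -> B w = B' w.
  move=> w wx nwx; apply/eqP/negPn/negP => hw.
  by have := xmin w hw; rewrite leqNgt (anc_strict acyc wx nwx).
have hm : is_match e x.
  by rewrite /is_match; apply/negP => px; move: hx; rewrite Bc // Bc' // eqxx.
set b := B x; set b' := B' x.
have cbx : connect e b x := winner_conn acyc hB x.
have cb'x : connect e b' x := winner_conn acyc hB' x.
have pb : is_player e b := Bp x.
have pb' : is_player e b' := Bp' x.
have scoreE : forall Bi B0 : {ffun V -> V}, score e sigma Bi B0 =
    \sum_(z | is_match e z) ((Bi z == B0 z)%:R * sigma z).
  move=> Bi B0; rewrite /score big_mkcondr; apply: eq_bigr => z _.
  by case: eqP; rewrite ?mul1r ?mul0r.
set Bb := bracket_at e Bh b; set Bb' := bracket_at e Bh b'.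
have E : (score e sigma Bb B - score e sigma Bb B') - (score e sigma Bb' B - score e sigma Bb' B')
   = \sum_(z | is_match e z) ((((Bb z == B z)%:R - (Bb z == B' z)%:R)
        - ((Bb' z == B z)%:R - (Bb' z == B' z)%:R)) * sigma z).
  rewrite !scoreE -!sumrB; apply: eq_bigr => z _; ring.
have pos : 0 < (score e sigma Bb B - score e sigma Bb B') - (score e sigma Bb' B - score e sigma Bb' B').
  rewrite E (bigD1 x) //=.
  have sx := sig_pos x hm.
  have h1 : Bb x = b by rewrite /Bb /bracket_at ffunE inE pb cbx.
  have h2 : Bb' x = b' by rewrite /Bb' /bracket_at ffunE inE pb' cb'x.
  have h3 : 0 <= \sum_(i | is_match e i && (i != x))
      (((Bb i == B i)%:R - (Bb i == B' i)%:R - ((Bb' i == B i)%:R - (Bb' i == B' i)%:R)) * sigma i).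
    apply: sumr_ge0 => z /andP[mz _].
    have sz := sig_pos z mz.
    case: (boolP (connect e z x && (z != x))) => [/andP[zx nzx] | hz].
      by rewrite (below z zx nzx) !subrr mul0r.
    case: (boolP (connect e x z)) => xz.
      have e1 : Bb z = b by rewrite /Bb /bracket_at ffunE inE pb (connect_trans cbx xz).
      have e2 : Bb' z = b' by rewrite /Bb' /bracket_at ffunE inE pb' (connect_trans cb'x xz).
      have n1 : (b == B' z) = false.
        apply/negP => /eqP hb.
        have := winner_mono uo acyc hB' xz; rewrite -hb => /(_ cbx) hh.
        by move: hx; rewrite /b' hh eqxx.
      have n2 : (b' == B z) = false.
        apply/negP => /eqP hb.
        have := winner_mono uo acyc hB xz; rewrite -hb => /(_ cb'x) hh.
        by move: hx; rewrite /b hh eqxx.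
      rewrite e1 e2 n1 n2.
      by case: (b == B z); case: (b' == B' z); rewrite /=; lra.
    have nb : forall c, connect e c x -> ~~ connect e c z.
      move=> c cx; apply/negP => cz.
      case: (chain uo cx cz) => [xz'|zx]; first by rewrite xz' in xz.
      move: hz; rewrite zx /= negbK => /eqP hzx.
      by move: xz; rewrite hzx connect0.
    have e1 : Bb z = Bh z by rewrite /Bb /bracket_at ffunE inE (negbTE (nb _ cbx)) andbF.
    have e2 : Bb' z = Bh z by rewrite /Bb' /bracket_at ffunE inE (negbTE (nb _ cb'x)) andbF.
    by rewrite e1 e2 subrr mul0r.
  rewrite h1 h2 !eqxx (negbTE hx) eq_sym (negbTE hx).
  rewrite /=; set s := sigma x in sx *; set r := \sum_(i | _) _ in h3 *; lra.
case: (eqVneq (score e sigma Bb B) (score e sigma Bb B')) => h.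
  case: (eqVneq (score e sigma Bb' B) (score e sigma Bb' B')) => h'.
    by move: pos; rewrite h h' !subrr ltxx.
  exists Bb' => //; apply/imsetP; exists b' => //; by rewrite inE.
exists Bb => //; apply/imsetP; exists b => //; by rewrite inE.
Qed.
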